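(* Let $u=u'u''$ be the product of two 5-complex numbers, and denote the parameters of $u'$, $u''$ by primes and double primes respectively. Then $v_+=v_+'v_+''$; $\rho_k=\rho_k'\rho_k''$ and $\phi_k=\phi_k'+\phi_k''$ (modulo $2\pi$) for $k=1,2$; $v_k=v_k'v_k''-\tilde v_k'\tilde v_k''$ and $\tilde v_k=v_k'\tilde v_k''+\tilde v_k'v_k''$ for $k=1,2$; $\tan\theta_+=\frac{1}{\sqrt2}\tan\theta_+'\tan\theta_+''$; $\tan\psi_1=\tan\psi_1'\tan\psi_1''$; and $\rho=\rho'\rho''$.
   Context: A 5-complex number is $u=x_0+h_1x_1+h_2x_2+h_3x_3+h_4x_4$ with real $x_j$, with componentwise addition and the commutative associative bilinear multiplication determined by $h_jh_k=h_{(j+k)\bmod 5}$, $h_0=1$. Its canonical variables are $v_+=\sum_{j=0}^4 x_j$, and for $k=1,2$: $v_k=\sum_{j=0}^4 x_j\cos(2\pi kj/5)$, $\tilde v_k=\sum_{j=0}^4x_j\sin(2\pi kj/5)$. For $k=1,2$ define $\rho_k\ge 0$ and $\phi_k\in[0,2\pi)$ by $\rho_k^2=v_k^2+\tilde v_k^2$, $\cos\phi_k=v_k/\rho_k$, $\sin\phi_k=\tilde v_k/\rho_k$. The planar angle $\psi_1\in[0,\pi/2]$ is given by $\tan\psi_1=\rho_1/\rho_2$, the polar angle $\theta_+\in[0,\pi]$ by $\tan\theta_+=\sqrt2\rho_1/v_+$, and the amplitude by $\rho=(v_+\rho_1^2\rho_2^2)^{1/5}$ (real fifth root). *)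

(* Defs.v *)
From Stdlib Require Import Reals Lra.
Open Scope R_scope.

(** A 5-complex number u = x0 + h1 x1 + h2 x2 + h3 x3 + h4 x4. *)
Record C5 := mkC5 { x0 : R; x1 : R; x2 : R; x3 : R; x4 : R }.

Definition comp (u : C5) (j : nat) : R :=
  match j with
  | 0%nat => x0 u | 1%nat => x1 u | 2%nat => x2 u | 3%nat => x3 u
  | 4%nat => x4 u | _ => 0
  end.

(** Bilinear multiplication determined by h_j h_k = h_{(j+k) mod 5}:
    the l-th component of u*w is the sum of x_j y_k over j+k = l (mod 5). *)
Definition mulc (l : nat) (u w : C5) : R :=
  sum_f_R0 (fun j => sum_f_R0 (fun k =>
     if Nat.eqb ((j + k) mod 5) l then comp u j * comp w k else 0) 4) 4.

Definition C5mul (u w : C5) : C5 :=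
  mkC5 (mulc 0 u w) (mulc 1 u w) (mulc 2 u w) (mulc 3 u w) (mulc 4 u w).

Definition vplus (u : C5) : R := sum_f_R0 (fun j => comp u j) 4.
Definition vk (k : nat) (u : C5) : R :=
  sum_f_R0 (fun j => comp u j * cos (2 * PI * INR k * INR j / 5)) 4.
Definition vtk (k : nat) (u : C5) : R :=
  sum_f_R0 (fun j => comp u j * sin (2 * PI * INR k * INR j / 5)) 4.

Definition rhok (k : nat) (u : C5) : R := sqrt (vk k u ^ 2 + vtk k u ^ 2).

(** phi_k in [0, 2 pi) with cos phi_k = v_k/rho_k, sin phi_k = vt_k/rho_k
    (only meaningful when rho_k <> 0; set to 0 otherwise). *)
Definition phik (k : nat) (u : C5) : R :=
  let r := rhok k u in
  if Req_EM_T r 0 then 0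
  else if Rle_dec 0 (vtk k u) then acos (vk k u / r)
  else 2 * PI - acos (vk k u / r).

Definition psi1 (u : C5) : R :=
  if Req_EM_T (rhok 2 u) 0 then PI / 2 else atan (rhok 1 u / rhok 2 u).

(** theta_+ in [0, pi] with tan theta_+ = sqrt 2 * rho_1 / v_+
    (pi/2 when v_+ = 0). *)
Definition thetaplus (u : C5) : R :=
  let q := sqrt 2 * rhok 1 u / vplus u in
  if Req_EM_T (vplus u) 0 then PI / 2
  else if Rlt_dec 0 (vplus u) then atan q else PI + atan q.

Definition root5 (x : R) : R :=
  if Req_EM_T x 0 then 0
  else if Rlt_dec 0 x then Rpower x (1/5) else - Rpower (- x) (1/5).

Definition amp (u : C5) : R :=
  root5 (vplus u * rhok 1 u ^ 2 * rhok 2 u ^ 2).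

(* Main.v *)
Require Import Defs.
From Stdlib Require Import Reals ZArith.
From Stdlib Require Import Lra Lia.
Open Scope R_scope.

Lemma conv (C S : nat -> R)
  (HC : forall a b, C ((a+b) mod 5)%nat = C a * C b - S a * S b) (u w : C5) :
  sum_f_R0 (fun l => mulc l u w * C l) 4 =
  sum_f_R0 (fun j => Defs.comp u j * C j) 4 * sum_f_R0 (fun j => Defs.comp w j * C j) 4
  - sum_f_R0 (fun j => Defs.comp u j * S j) 4 * sum_f_R0 (fun j => Defs.comp w j * S j) 4.
Proof.
  transitivity (sum_f_R0 (fun a => sum_f_R0 (fun b =>
     Defs.comp u a * Defs.comp w b * C ((a+b) mod 5)%nat) 4) 4).
  { unfold mulc; simpl; ring. }
  transitivity (sum_f_R0 (fun a => sum_f_R0 (fun b =>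
     Defs.comp u a * Defs.comp w b * (C a * C b - S a * S b)) 4) 4).
  { apply sum_eq; intros a _; apply sum_eq; intros b _; rewrite HC; reflexivity. }
  simpl; ring.
Qed.

Lemma angle_split (k a b : nat) :
  2*PI*INR k*INR a/5 + 2*PI*INR k*INR b/5 =
  2*PI*INR k*INR ((a+b) mod 5)/5 + 2*INR (k*((a+b)/5))*PI.
Proof.
  pose proof (Nat.div_mod (a+b) 5 ltac:(lia)) as H.
  apply (f_equal INR) in H. rewrite plus_INR, plus_INR, mult_INR in H.
  replace (INR 5) with 5 in H by (simpl; ring).
  rewrite mult_INR.
  replace (2*PI*INR k*INR a/5 + 2*PI*INR k*INR b/5) with (2*PI*INR k*(INR a+INR b)/5) by field.
  rewrite H. field.
Qed.

Lemma HCk (k a b : nat) :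
  cos (2*PI*INR k*INR ((a+b) mod 5)/5) =
  cos (2*PI*INR k*INR a/5) * cos (2*PI*INR k*INR b/5)
  - sin (2*PI*INR k*INR a/5) * sin (2*PI*INR k*INR b/5).
Proof. rewrite <- cos_plus, angle_split, cos_period. reflexivity. Qed.

Lemma HSk (k a b : nat) :
  sin (2*PI*INR k*INR ((a+b) mod 5)/5) =
  cos (2*PI*INR k*INR a/5) * sin (2*PI*INR k*INR b/5)
  + sin (2*PI*INR k*INR a/5) * cos (2*PI*INR k*INR b/5).
Proof. rewrite <- (sin_period _ (k*((a+b)/5))), <- angle_split, sin_plus. ring. Qed.

Lemma vk_mul k u w : vk k (C5mul u w) = vk k u * vk k w - vtk k u * vtk k w.
Proof.
  unfold vk, vtk.
  transitivity (sum_f_R0 (fun l => mulc l u w * cos (2*PI*INR k*INR l/5)) 4).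
  { reflexivity. }
  apply conv. intros; apply HCk.
Qed.

Lemma vtk_mul k u w : vtk k (C5mul u w) = vk k u * vtk k w + vtk k u * vk k w.
Proof.
  unfold vk, vtk.
  transitivity (sum_f_R0 (fun l => mulc l u w * sin (2*PI*INR k*INR l/5)) 4).
  { reflexivity. }
  transitivity (sum_f_R0 (fun a => sum_f_R0 (fun b =>
     Defs.comp u a * Defs.comp w b * sin (2*PI*INR k*INR ((a+b) mod 5)/5)) 4) 4).
  { unfold mulc; simpl; ring. }
  transitivity (sum_f_R0 (fun a => sum_f_R0 (fun b =>
     Defs.comp u a * Defs.comp w b * (cos (2*PI*INR k*INR a/5) * sin (2*PI*INR k*INR b/5)
  + sin (2*PI*INR k*INR a/5) * cos (2*PI*INR k*INR b/5))) 4) 4).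
  { apply sum_eq; intros a _; apply sum_eq; intros b _; rewrite HSk; reflexivity. }
  simpl; ring.
Qed.

Lemma vplus_mul u w : vplus (C5mul u w) = vplus u * vplus w.
Proof. unfold vplus, C5mul, mulc; simpl; ring. Qed.

Lemma rhok_mul k u w : rhok k (C5mul u w) = rhok k u * rhok k w.
Proof.
  unfold rhok. rewrite vk_mul, vtk_mul, <- sqrt_mult.
  - f_equal; ring.
  - nra.
  - nra.
Qed.

Lemma acos_phase v t : sqrt (v^2+t^2) <> 0 ->
  let r := sqrt (v^2+t^2) in
  let p := if Rle_dec 0 t then acos (v/r) else 2*PI - acos (v/r) in
  cos p = v/r /\ sin p = t/r.
Proof.
  intros Hr0 r p.
  assert (Hr : 0 < r) by (pose proof (sqrt_pos (v^2+t^2)); unfold r in *; lra).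
  assert (Hr2 : r*r = v^2+t^2) by (unfold r; apply sqrt_sqrt; nra).
  set (x := v/r).
  assert (Hv : v = x*r) by (unfold x; field; lra).
  assert (Hx2 : x*x <= 1).
  { apply (Rmult_le_reg_r (r*r)); [nra|].
    rewrite Hv in Hr2. assert (0 <= t^2) by nra. nra. }
  assert (Hx : -1 <= x <= 1) by (split; nra).
  assert (Hs : sqrt (1 - x²) = Rabs (t/r)).
  { rewrite <- sqrt_Rsqr_abs. f_equal. unfold Rsqr, x. field_simplify_eq; [|lra].
    nra. }
  unfold p; change (v/r) with x; destruct (Rle_dec 0 t) as [Ht|Ht].
  - rewrite cos_acos, sin_acos, Hs by exact Hx. split; [reflexivity|].
    apply Rabs_pos_eq. unfold Rdiv; apply Rmult_le_pos; [lra| left; apply Rinv_0_lt_compat; lra].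
  - rewrite cos_minus, sin_minus, cos_2PI, sin_2PI, cos_acos, sin_acos, Hs by exact Hx.
    split; [ring|]. rewrite Rabs_left.
    + ring.
    + unfold Rdiv. assert (0 < /r) by (apply Rinv_0_lt_compat; lra). nra.
Qed.

Lemma phik_cs k u : rhok k u <> 0 ->
  cos (phik k u) = vk k u / rhok k u /\ sin (phik k u) = vtk k u / rhok k u.
Proof.
  intros H. unfold phik. destruct (Req_EM_T (rhok k u) 0); [contradiction|].
  apply (acos_phase (vk k u) (vtk k u) H).
Qed.

Lemma same_cs a b : cos a = cos b -> sin a = sin b -> exists m : Z, a = b + 2*PI*IZR m.
Proof.
  intros Hc Hs.
  assert (H1 : cos (a - b) = 1).
  { rewrite cos_minus, <- Hc, <- Hs. pose proof (sin2_cos2 a). unfold Rsqr in *. lra. }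
  assert (H0 : sin ((a - b)/2) = 0).
  { replace (a - b) with (2 * ((a-b)/2)) in H1 by field. rewrite cos_2a_sin in H1. nra. }
  destruct (sin_eq_0_0 _ H0) as [m Hm]. exists m. lra.
Qed.

Lemma tan_theta w : vplus w <> 0 -> tan (thetaplus w) = sqrt 2 * rhok 1 w / vplus w.
Proof.
  intros H. unfold thetaplus. destruct (Req_EM_T (vplus w) 0); [contradiction|].
  destruct (Rlt_dec 0 (vplus w)); [apply tan_atan|].
  rewrite <- (tan_atan (sqrt 2 * rhok 1 w / vplus w)) at 2.
  unfold tan. rewrite Rplus_comm, neg_sin, neg_cos. unfold Rdiv. rewrite Rinv_opp. ring.
Qed.

Lemma tan_psi w : rhok 2 w <> 0 -> tan (psi1 w) = rhok 1 w / rhok 2 w.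
Proof.
  intros H. unfold psi1. destruct (Req_EM_T (rhok 2 w) 0); [contradiction|].
  apply tan_atan.
Qed.

Lemma root5_0 : root5 0 = 0.
Proof. unfold root5. destruct (Req_EM_T 0 0); [reflexivity| contradiction]. Qed.
Lemma root5_pos x : 0 < x -> root5 x = Rpower x (1/5).
Proof. intros H. unfold root5. destruct (Req_EM_T x 0); [lra|].
  destruct (Rlt_dec 0 x); [reflexivity| lra]. Qed.
Lemma root5_neg x : x < 0 -> root5 x = - Rpower (-x) (1/5).
Proof. intros H. unfold root5. destruct (Req_EM_T x 0); [lra|].
  destruct (Rlt_dec 0 x); [lra| reflexivity]. Qed.

Lemma root5_mul a b : root5 (a*b) = root5 a * root5 b.
Proof.
  destruct (Rtotal_order a 0) as [Ha|[Ha|Ha]];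
  destruct (Rtotal_order b 0) as [Hb|[Hb|Hb]];
  try (subst; rewrite ?Rmult_0_l, ?Rmult_0_r, root5_0; ring).
  - rewrite (root5_pos (a*b)), (root5_neg a), (root5_neg b) by nra.
    replace (a*b) with ((-a)*(-b)) by ring. rewrite <- Rpower_mult_distr by lra. ring.
  - rewrite (root5_neg (a*b)), (root5_neg a), (root5_pos b) by nra.
    replace (-(a*b)) with ((-a)*b) by ring. rewrite <- Rpower_mult_distr by lra. ring.
  - rewrite (root5_neg (a*b)), (root5_pos a), (root5_neg b) by nra.
    replace (-(a*b)) with (a*(-b)) by ring. rewrite <- Rpower_mult_distr by lra. ring.
  - rewrite (root5_pos (a*b)), (root5_pos a), (root5_pos b) by nra.
    rewrite <- Rpower_mult_distr by lra. ring.
Qed.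

Theorem mainTheorem2 (u' u'' : C5) :
  let u := C5mul u' u'' in
  vplus u = vplus u' * vplus u'' /\
  (forall k : nat, (k = 1 \/ k = 2)%nat ->
     rhok k u = rhok k u' * rhok k u'' /\
     (rhok k u' <> 0 -> rhok k u'' <> 0 ->
        exists m : Z, phik k u = phik k u' + phik k u'' + 2 * PI * IZR m) /\
     vk k u = vk k u' * vk k u'' - vtk k u' * vtk k u'' /\
     vtk k u = vk k u' * vtk k u'' + vtk k u' * vk k u'') /\
  (vplus u' <> 0 -> vplus u'' <> 0 ->
     tan (thetaplus u) = / sqrt 2 * tan (thetaplus u') * tan (thetaplus u'')) /\
  (rhok 2 u' <> 0 -> rhok 2 u'' <> 0 ->
     tan (psi1 u) = tan (psi1 u') * tan (psi1 u'')) /\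
  amp u = amp u' * amp u''.
Proof.
  intros u. unfold u.
  split; [apply vplus_mul|].
  split.
  { intros k _. split; [apply rhok_mul|]. split; [|split; [apply vk_mul|apply vtk_mul]].
    intros H1 H2.
    assert (H : rhok k (C5mul u' u'') <> 0) by (rewrite rhok_mul; apply Rmult_integral_contrapositive; tauto).
    destruct (phik_cs k _ H) as [Hc Hs].
    destruct (phik_cs k _ H1) as [Hc1 Hs1].
    destruct (phik_cs k _ H2) as [Hc2 Hs2].
    apply same_cs.
    - rewrite Hc, cos_plus, Hc1, Hc2, Hs1, Hs2, vk_mul, rhok_mul. field. tauto.
    - rewrite Hs, sin_plus, Hc1, Hc2, Hs1, Hs2, vtk_mul, rhok_mul. field. tauto. }
  split.
  { intros H1 H2.
    assert (H : vplus (C5mul u' u'') <> 0) by (rewrite vplus_mul; apply Rmult_integral_contrapositive; tauto).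
    rewrite !tan_theta by assumption. rewrite vplus_mul, rhok_mul.
    assert (sqrt 2 <> 0) by (apply Rgt_not_eq, sqrt_lt_R0; lra).
    field. tauto. }
  split.
  { intros H1 H2.
    assert (H : rhok 2 (C5mul u' u'') <> 0) by (rewrite rhok_mul; apply Rmult_integral_contrapositive; tauto).
    rewrite !tan_psi by assumption. rewrite !rhok_mul. field. tauto. }
  unfold amp. rewrite <- root5_mul, vplus_mul, !rhok_mul. f_equal. ring.
Qed.
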